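(* Let $A,B$ be finite-dimensional quantum systems. Let $\mathcal{E}_1$ be a doubly stochastic quantum operation on $AB$ (trace-preserving and unital, $\mathcal{E}_1(I)=I$), and let $\mathcal{E}_2$ be an arbitrary trace-preserving quantum operation on $AB$. Then $$R_r(\mathcal{E}_1\circ\mathcal{E}_2)\leq R_r(\mathcal{E}_1)+R_r(\mathcal{E}_2)+R_r(\mathcal{E}_1)R_r(\mathcal{E}_2).$$
   Context: A quantum operation (completely positive map) $\mathcal{E}$ on $AB$ is separable if it has an operator-sum representation $\mathcal{E}(\rho)=\sum_j(A_j\otimes B_j)\rho(A_j^\dagger\otimes B_j^\dagger)$. For trace-preserving quantum operations $\mathcal{E},\mathcal{F}$ on $AB$, $R(\mathcal{E}\|\mathcal{F})$ is the minimal $t\geq0$ such that $\mathcal{E}+t\mathcal{F}$ is separable, and the random robustness is $R_r(\mathcal{E})=R(\mathcal{E}\|\mathcal{D})$ with $\mathcal{D}(\rho)=\mathrm{tr}(\rho)\,I/(d_Ad_B)$, $d_A,d_B$ the dimensions of $A,B$. *)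

(* Defs.v *)
From HB Require Import structures.
From mathcomp Require Import all_boot all_order all_algebra.
From mathcomp Require Import complex mxtens.
From mathcomp Require Import classical_sets reals.

Set Implicit Arguments.
Unset Strict Implicit.
Unset Printing Implicit Defensive.

Import Order.TTheory GRing.Theory Num.Theory.
Local Open Scope ring_scope.
Local Open Scope complex_scope.

Section QuantumOps.
Variables (R : realType) (dA dB : nat).

Local Notation C := (R[i]).
(* operators on the composite system AB = C^dA (x) C^dB *)
Local Notation op := ('M[C]_(dA * dB)).

Definition adjmx (n m : nat) (M : 'M[C]_(n, m)) : 'M[C]_(m, n) :=
  (map_mx (@Num.conj C) M)^T.

Definition supop := op -> op.

Definition kraus_map (Ks : seq op) : supop :=
  fun rho => \sum_(K <- Ks) (K *m rho *m adjmx K).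

(* quantum operation = completely positive map, i.e. one with an
   operator-sum (Kraus) representation *)
Definition quantum_operation (E : supop) : Prop :=
  exists Ks : seq op, forall rho, E rho = kraus_map Ks rho.

Definition trace_preserving_qo (E : supop) : Prop :=
  quantum_operation E /\ forall rho, \tr (E rho) = \tr rho.

Definition doubly_stochastic (E : supop) : Prop :=
  trace_preserving_qo E /\ E 1%:M = 1%:M.

Definition separable (E : supop) : Prop :=
  exists ABs : seq ('M[C]_dA * 'M[C]_dB),
    forall rho, E rho = kraus_map [seq tensmx p.1 p.2 | p <- ABs] rho.

Definition depol : supop :=
  fun rho => (\tr rho / (dA * dB)%:R) *: 1%:M.

(* R(E||F) = min { t >= 0 | E + t F separable } (taken as an infimum) *)
Definition rel_robustness (E F : supop) : R :=
  inf [set t : R | 0 <= t /\ separable (fun rho => E rho + (t%:C) *: F rho)].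

Definition random_robustness (E : supop) : R := rel_robustness E depol.

End QuantumOps.

(* Main.v *)
Require Import Defs.
From HB Require Import structures.
From mathcomp Require Import all_boot all_order all_algebra.
From mathcomp Require Import complex mxtens.
From mathcomp Require Import classical_sets reals.
From mathcomp Require Import ring lra.
Import Order.TTheory GRing.Theory Num.Theory.
Local Open Scope ring_scope.
Set Implicit Arguments.
Unset Strict Implicit.
Unset Printing Implicit Defensive.


Lemma adjmxD (R : realType) n m (A B : 'M[R[i]]_(n, m)) :
  adjmx (A + B) = adjmx A + adjmx B.
Proof. by rewrite /adjmx map_mxD linearD. Qed.

Lemma adjmxZ (R : realType) n m (a : R[i]) (A : 'M[R[i]]_(n, m)) :
  adjmx (a *: A) = a^* *: adjmx A.
Proof. by rewrite /adjmx map_mxZ linearZ. Qed.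

Lemma adjmxM (R : realType) n m p (A : 'M[R[i]]_(n, m)) (B : 'M[R[i]]_(m, p)) :
  adjmx (A *m B) = adjmx B *m adjmx A.
Proof. by rewrite /adjmx map_mxM trmx_mul. Qed.

Lemma adjmx0 (R : realType) n m : adjmx (0 : 'M[R[i]]_(n, m)) = 0.
Proof. by rewrite /adjmx map_mx0 trmx0. Qed.

Lemma adjmx_sum (R : realType) n m (I : Type) (r : seq I) (F : I -> 'M[R[i]]_(n, m)) :
  adjmx (\sum_(i <- r) F i) = \sum_(i <- r) adjmx (F i).
Proof.
elim: r => [|x r IH]; first by rewrite !big_nil adjmx0.
by rewrite !big_cons adjmxD IH.
Qed.

Definition psi (R : realType) n (M N rho : 'M[R[i]]_n) := M *m rho *m adjmx N.

Lemma psiDl (R : realType) n (M1 M2 N rho : 'M[R[i]]_n) :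
  psi (M1 + M2) N rho = psi M1 N rho + psi M2 N rho.
Proof. by rewrite /psi !mulmxDl. Qed.

Lemma psiDr (R : realType) n (M N1 N2 rho : 'M[R[i]]_n) :
  psi M (N1 + N2) rho = psi M N1 rho + psi M N2 rho.
Proof. by rewrite /psi adjmxD mulmxDr. Qed.

Lemma psiZl (R : realType) n a (M N rho : 'M[R[i]]_n) :
  psi (a *: M) N rho = a *: psi M N rho.
Proof. by rewrite /psi !scalemxAl. Qed.

Lemma psiZr (R : realType) n a (M N rho : 'M[R[i]]_n) :
  psi M (a *: N) rho = a^* *: psi M N rho.
Proof. by rewrite /psi adjmxZ scalemxAr. Qed.

Lemma psi_suml (R : realType) n (I : Type) (r : seq I) (F : I -> 'M[R[i]]_n) N rho :
  psi (\sum_(i <- r) F i) N rho = \sum_(i <- r) psi (F i) N rho.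
Proof.
elim: r => [|x r IH]; first by rewrite !big_nil /psi !mul0mx.
by rewrite !big_cons psiDl IH.
Qed.

Lemma psi_sumr (R : realType) n (I : Type) (r : seq I) (F : I -> 'M[R[i]]_n) M rho :
  psi M (\sum_(i <- r) F i) rho = \sum_(i <- r) psi M (F i) rho.
Proof.
elim: r => [|x r IH]; first by rewrite !big_nil /psi adjmx0 mulmx0.
by rewrite !big_cons psiDr IH.
Qed.

Lemma kraus_mapE (R : realType) dA dB (Ks : seq 'M[R[i]]_(dA * dB)) rho :
  kraus_map Ks rho = \sum_(K <- Ks) psi K K rho.
Proof. by []. Qed.

Lemma sep_ext (R : realType) dA dB (E F : supop R dA dB) :
  (forall rho, E rho = F rho) -> separable E -> separable F.
Proof. by move=> EF [L HL]; exists L => rho; rewrite -EF. Qed.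

Lemma sep0 (R : realType) dA dB : separable (fun _ : 'M[R[i]]_(dA * dB) => 0).
Proof. by exists [::] => rho; rewrite /kraus_map big_nil. Qed.

Lemma sepD (R : realType) dA dB (E F : supop R dA dB) :
  separable E -> separable F -> separable (fun rho => E rho + F rho).
Proof.
move=> [L1 H1] [L2 H2]; exists (L1 ++ L2) => rho.
by rewrite H1 H2 /kraus_map map_cat big_cat.
Qed.

Lemma sep_sum (R : realType) dA dB (I : Type) (r : seq I) (F : I -> supop R dA dB) :
  (forall i, separable (F i)) -> separable (fun rho => \sum_(i <- r) F i rho).
Proof.
move=> HF; elim: r => [|x r IH].
  by apply: sep_ext (sep0 _ _ _) => rho; rewrite big_nil.
by apply: sep_ext (sepD (HF x) IH) => rho; rewrite big_cons.
Qed.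

Lemma tensmxZl (R : comPzRingType) m n p q (a : R) (A : 'M[R]_(m, n)) (B : 'M[R]_(p, q)) :
  (a *: A) *t B = a *: (A *t B).
Proof. by apply/matrixP => i j; rewrite !mxE mulrA. Qed.

Lemma tensmxZr (R : comPzRingType) m n p q (a : R) (A : 'M[R]_(m, n)) (B : 'M[R]_(p, q)) :
  A *t (a *: B) = a *: (A *t B).
Proof. by apply/matrixP => i j; rewrite !mxE mulrCA. Qed.

Lemma tensmxDl (R : comPzRingType) m n p q (A1 A2 : 'M[R]_(m, n)) (B : 'M[R]_(p, q)) :
  (A1 + A2) *t B = A1 *t B + A2 *t B.
Proof. by apply/matrixP => i j; rewrite !mxE mulrDl. Qed.

Lemma tensmxDr (R : comPzRingType) m n p q (A : 'M[R]_(m, n)) (B1 B2 : 'M[R]_(p, q)) :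
  A *t (B1 + B2) = A *t B1 + A *t B2.
Proof. by apply/matrixP => i j; rewrite !mxE mulrDr. Qed.

Lemma sepZ (R : realType) dA dB (E : supop R dA dB) (a : R[i]) :
  0 <= a -> separable E -> separable (fun rho => a *: E rho).
Proof.
move=> a0 [L HL]; exists [seq (sqrtC a *: p.1, p.2) | p <- L] => rho.
rewrite HL /kraus_map -map_comp scaler_sumr !big_map; apply: eq_bigr => p _ /=.
rewrite tensmxZl.
change (a *: psi (p.1 *t p.2) (p.1 *t p.2) rho = psi (sqrtC a *: (p.1 *t p.2)) (sqrtC a *: (p.1 *t p.2)) rho).
rewrite psiZl psiZr scalerA.
have s0 : 0 <= sqrtC a by rewrite sqrtC_ge0.
by rewrite (geC0_conj s0) -expr2 sqrtCK.
Qed.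

Lemma sep_prod (R : realType) dA dB (X : 'M[R[i]]_dA) (Y : 'M[R[i]]_dB) :
  separable (fun rho => psi (X *t Y) (X *t Y) rho).
Proof. by exists [:: (X, Y)] => rho; rewrite /kraus_map big_seq1. Qed.

Lemma sep_comp (R : realType) dA dB (E F : supop R dA dB) :
  separable E -> separable F -> separable (E \o F).
Proof.
move=> [L1 H1] [L2 H2].
exists [seq (p.1.1 *m p.2.1, p.1.2 *m p.2.2) | p <- [seq (x, y) | x <- L1, y <- L2]].
move=> rho /=; rewrite H2 H1 /kraus_map -map_comp !big_map big_allpairs.
apply: eq_bigr => p _; rewrite mulmx_sumr mulmx_suml.
apply: eq_bigr => q _ /=.
by rewrite -tensmx_mul adjmxM !mulmxA.
Qed.


Lemma tens_delta (R : comPzRingType) dA dB (a a' : 'I_dA) (b b' : 'I_dB) :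
  delta_mx a a' *t delta_mx b b' =
  delta_mx (mxtens_index (a, b)) (mxtens_index (a', b')) :> 'M[R]_(dA * dB).
Proof.
apply/matrixP => i j.
case: (mxtens_indexP i) => i1 i2; case: (mxtens_indexP j) => j1 j2.
rewrite tensmxE !mxE !(inj_eq (can_inj (@mxtens_indexK _ _))) !xpair_eqE.
by rewrite -natrM mulnb andbACA.
Qed.

Lemma tens_delta' (R : comPzRingType) dA dB (i j : 'I_(dA * dB)) :
  delta_mx (mxtens_unindex i).1 (mxtens_unindex j).1 *t
  delta_mx (mxtens_unindex i).2 (mxtens_unindex j).2 = delta_mx i j :> 'M[R]_(dA * dB).
Proof. by rewrite tens_delta -!surjective_pairing !mxtens_unindexK. Qed.

Lemma sep_delta (R : realType) dA dB (i j : 'I_(dA * dB)) :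
  separable (fun rho : 'M[R[i]]_(dA * dB) => psi (delta_mx i j) (delta_mx i j) rho).
Proof. by rewrite -tens_delta'; apply: sep_prod. Qed.

Definition Tot (R : realType) dA dB (rho : 'M[R[i]]_(dA * dB)) :=
  \sum_(n : 'I_(dA * dB) * 'I_(dA * dB)) psi (delta_mx n.1 n.2) (delta_mx n.1 n.2) rho.

Lemma sep_totsub (R : realType) dA dB (i j : 'I_(dA * dB)) :
  separable (fun rho : 'M[R[i]]_(dA * dB) => Tot rho - psi (delta_mx i j) (delta_mx i j) rho).
Proof.
pose F (n : 'I_(dA * dB) * 'I_(dA * dB)) (rho : 'M[R[i]]_(dA * dB)) :=
  if n != (i, j) then psi (delta_mx n.1 n.2) (delta_mx n.1 n.2) rho else 0.
apply: (sep_ext _ (@sep_sum _ _ _ _ (index_enum _) F _)).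
  move=> rho; rewrite /Tot [in RHS](bigD1 (i, j)) //= addrAC subrr add0r.
  rewrite (bigD1 (i, j)) //= {1}/F eqxx /= add0r.
  by apply: eq_bigr => n hn; rewrite /F hn.
move=> n; rewrite /F; case: (n != (i, j)); first exact: sep_delta.
exact: sep0.
Qed.

Lemma psi_delta (R : realType) d (i j : 'I_d) (rho : 'M[R[i]]_d) :
  psi (delta_mx i j) (delta_mx i j) rho = rho j j *: delta_mx i i.
Proof.
have adj : adjmx (delta_mx i j : 'M[R[i]]_d) = delta_mx j i.
  by rewrite /adjmx map_delta_mx trmx_delta.
have E1 (M : 'M[R[i]]_d) : delta_mx i j *m M = \matrix_(x, z) ((x == i)%:R * M j z).
  apply/matrixP => x z; rewrite !mxE (bigD1 j) //= big1 => [|l /negbTE hl].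
    by rewrite !mxE eqxx andbT addr0.
  by rewrite !mxE hl andbF mul0r.
have E2 (M : 'M[R[i]]_d) : M *m delta_mx j i = \matrix_(x, z) (M x j * (z == i)%:R).
  apply/matrixP => x z; rewrite !mxE (bigD1 j) //= big1 => [|l /negbTE hl].
    by rewrite !mxE eqxx addr0.
  by rewrite !mxE hl mulr0.
rewrite /psi adj E1 E2; apply/matrixP => x y; rewrite !mxE.
rewrite -mulnb natrM; ring.
Qed.

Lemma Tot_eq (R : realType) dA dB (rho : 'M[R[i]]_(dA * dB)) :
  Tot rho = \tr rho *: 1%:M.
Proof.
rewrite /Tot -(pair_big xpredT xpredT (fun i j => psi (delta_mx i j) (delta_mx i j) rho)) /=.
under eq_bigr do under eq_bigr do rewrite psi_delta.
rewrite exchange_big /= /mxtrace scaler_suml.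
by apply: eq_bigr => j _; rewrite -scaler_sumr -mx1_sum_delta.
Qed.


Lemma quad_gen (R : realType) n (A B C D rho : 'M[R[i]]_n) (w : R[i]) :
  psi (A + w^* *: B + w *: C + (w * w^*) *: D) (A + w^* *: B + w *: C + (w * w^*) *: D) rho +
  psi (A + (- w)^* *: B + (- w) *: C + ((- w) * (- w)^*) *: D)
      (A + (- w)^* *: B + (- w) *: C + ((- w) * (- w)^*) *: D) rho =
  2%:R *: (psi A A rho + ((w * w^*) * (w * w^*)) *: psi D D rho
     + (w * w^*) *: psi A D rho + (w * w^*) *: psi D A rho
     + (w * w^*) *: psi B B rho + (w * w^*) *: psi C C rho
     + (w^* * w^*) *: psi B C rho + (w * w) *: psi C B rho).
Proof.
rewrite !psiDl !psiDr !psiZl !psiZr !rmorphN /= !rmorphM /= !conjCK.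
move: (psi A A rho) (psi A B rho) (psi A C rho) (psi A D rho) => a1 a2 a3 a4.
move: (psi B A rho) (psi B B rho) (psi B C rho) (psi B D rho) => b1 b2 b3 b4.
move: (psi C A rho) (psi C B rho) (psi C C rho) (psi C D rho) => c1 c2 c3 c4.
move: (psi D A rho) (psi D B rho) (psi D C rho) (psi D D rho) => d1 d2 d3 d4.
apply/matrixP => x y. rewrite !mxE.
rewrite !rmorphN /= !conjCK.
ring.
Qed.


Lemma tens_expand (R : comPzRingType) m n p q (X X' : 'M[R]_(m, n)) (Y Y' : 'M[R]_(p, q)) (w v : R) :
  (X + w *: X') *t (Y + v *: Y') =
  X *t Y + v *: (X *t Y') + w *: (X' *t Y) + (w * v) *: (X' *t Y').
Proof. by rewrite tensmxDl !tensmxDr !tensmxZl !tensmxZr scalerA !addrA. Qed.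

Definition Mw (R : realType) n (A B C D : 'M[R[i]]_n) (w : R[i]) :=
  A + w^* *: B + w *: C + (w * w^*) *: D.

Lemma cross_gen (R : realType) n (A B C D rho : 'M[R[i]]_n) :
  4%:R^-1 *: (psi (Mw A B C D 1) (Mw A B C D 1) rho + psi (Mw A B C D (- 1)) (Mw A B C D (- 1)) rho
     + (psi (Mw A B C D 'i) (Mw A B C D 'i) rho + psi (Mw A B C D (- 'i)) (Mw A B C D (- 'i)) rho))
  = psi A A rho + psi D D rho + psi A D rho + psi D A rho + psi B B rho + psi C C rho.
Proof.
rewrite /Mw (quad_gen A B C D rho 1) (quad_gen A B C D rho 'i).
rewrite rmorph1 !mulr1 conjCi !mulrNN !mulrN -!expr2 sqrCi !mulrNN !opprK.
move: (psi A A rho) (psi B B rho) (psi C C rho) (psi D D rho) => a1 a2 a3 a4.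
move: (psi A D rho) (psi D A rho) (psi B C rho) (psi C B rho) => a5 a6 a7 a8.
apply/matrixP => x y. rewrite !mxE.
field.
by [].
Qed.

Lemma cross_sep (R : realType) dA dB (X X' : 'M[R[i]]_dA) (Y Y' : 'M[R[i]]_dB) :
  separable (fun rho => psi (X *t Y) (X *t Y) rho + psi (X' *t Y') (X' *t Y') rho
     + psi (X *t Y) (X' *t Y') rho + psi (X' *t Y') (X *t Y) rho
     + psi (X *t Y') (X *t Y') rho + psi (X' *t Y) (X' *t Y) rho).
Proof.
pose Q (w : R[i]) := fun rho : 'M[R[i]]_(dA * dB) =>
  psi ((X + w *: X') *t (Y + w^* *: Y')) ((X + w *: X') *t (Y + w^* *: Y')) rho.
have sQ w : separable (Q w) by apply: sep_prod.
have HQ w rho : Q w rho = psi (Mw (X *t Y) (X *t Y') (X' *t Y) (X' *t Y') w)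
                              (Mw (X *t Y) (X *t Y') (X' *t Y) (X' *t Y') w) rho.
  by rewrite /Q /Mw; congr psi; apply: tens_expand.
have := @sepZ _ _ _ _ (4%:R^-1) _ (sepD (sepD (sQ 1) (sQ (- 1))) (sepD (sQ 'i) (sQ (- 'i)))).
rewrite invr_ge0 ler0n => /(_ isT); apply: sep_ext => rho.
rewrite !HQ.
exact: cross_gen.
Qed.


Lemma psi_tensZ (R : realType) dA dB (a b : R[i]) (P P' : 'M[R[i]]_dA) (Q Q' : 'M[R[i]]_dB) rho :
  psi ((a *: P) *t Q) ((b *: P') *t Q') rho = (a * b^*) *: psi (P *t Q) (P' *t Q') rho.
Proof. by rewrite !tensmxZl psiZl psiZr scalerA. Qed.

Lemma pair_sep (R : realType) dA dB (K : 'M[R[i]]_(dA * dB)) (n m : 'I_(dA * dB) * 'I_(dA * dB)) :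
  separable (fun rho =>
    (K n.1 n.2 * (K m.1 m.2)^*) *: psi (delta_mx n.1 n.2) (delta_mx m.1 m.2) rho
  + (K m.1 m.2 * (K n.1 n.2)^*) *: psi (delta_mx m.1 m.2) (delta_mx n.1 n.2) rho
  + (2%:R * (K n.1 n.2 * (K n.1 n.2)^* + K m.1 m.2 * (K m.1 m.2)^*)) *: Tot rho).
Proof.
set cn := K n.1 n.2; set cm := K m.1 m.2.
set ean := delta_mx (mxtens_unindex n.1).1 (mxtens_unindex n.2).1 : 'M[R[i]]_dA.
set ebn := delta_mx (mxtens_unindex n.1).2 (mxtens_unindex n.2).2 : 'M[R[i]]_dB.
set eam := delta_mx (mxtens_unindex m.1).1 (mxtens_unindex m.2).1 : 'M[R[i]]_dA.
set ebm := delta_mx (mxtens_unindex m.1).2 (mxtens_unindex m.2).2 : 'M[R[i]]_dB.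
have hn : ean *t ebn = delta_mx n.1 n.2 by apply: tens_delta'.
have hm : eam *t ebm = delta_mx m.1 m.2 by apply: tens_delta'.
have hB : ean *t ebm = delta_mx (mxtens_index ((mxtens_unindex n.1).1, (mxtens_unindex m.1).2))
                                (mxtens_index ((mxtens_unindex n.2).1, (mxtens_unindex m.2).2)).
  by apply: tens_delta.
have hC : eam *t ebn = delta_mx (mxtens_index ((mxtens_unindex m.1).1, (mxtens_unindex n.1).2))
                                (mxtens_index ((mxtens_unindex m.2).1, (mxtens_unindex n.2).2)).
  by apply: tens_delta.
have nn : 0 <= cn * cn^* by apply: mul_conjC_ge0.
have mm : 0 <= cm * cm^* by apply: mul_conjC_ge0.
have tB : separable (fun rho => Tot rho - psi (ean *t ebm) (ean *t ebm) rho).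
  by rewrite hB; apply: sep_totsub.
have tC : separable (fun rho => Tot rho - psi (eam *t ebn) (eam *t ebn) rho).
  by rewrite hC; apply: sep_totsub.
have S := sepD (sepD (sepD (sepD (cross_sep (cn *: ean) (cm *: eam) ebn ebm)
   (sepZ nn (@sep_totsub R dA dB n.1 n.2))) (sepZ nn tB))
   (sepZ mm tC)) (sepZ mm (@sep_totsub R dA dB m.1 m.2)).
apply: (sep_ext _ S) => rho /=.
rewrite !psi_tensZ hn hm.
move: (psi (delta_mx n.1 n.2) (delta_mx n.1 n.2) rho) (psi (delta_mx m.1 m.2) (delta_mx m.1 m.2) rho) => a1 a2.
move: (psi (delta_mx n.1 n.2) (delta_mx m.1 m.2) rho) (psi (delta_mx m.1 m.2) (delta_mx n.1 n.2) rho) => a3 a4.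
move: (psi (ean *t ebm) (ean *t ebm) rho) (psi (eam *t ebn) (eam *t ebn) rho) (Tot rho) => a5 a6 t.
apply/matrixP => x y; rewrite !mxE.
ring.
Qed.


Lemma psi_expand (R : realType) d (K rho : 'M[R[i]]_d) :
  psi K K rho = \sum_(n : 'I_d * 'I_d) \sum_(m : 'I_d * 'I_d)
     (K n.1 n.2 * (K m.1 m.2)^*) *: psi (delta_mx n.1 n.2) (delta_mx m.1 m.2) rho.
Proof.
have HK : K = \sum_(n : 'I_d * 'I_d) K n.1 n.2 *: delta_mx n.1 n.2.
  by rewrite {1}[K]matrix_sum_delta pair_bigA.
rewrite {1 2}HK psi_suml; apply: eq_bigr => n _.
rewrite psi_sumr; apply: eq_bigr => m _.
by rewrite psiZl psiZr scalerA.
Qed.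

Lemma kraus1 (R : realType) dA dB (K : 'M[R[i]]_(dA * dB)) :
  exists t : R[i], 0 <= t /\ separable (fun rho => psi K K rho + t *: Tot rho).
Proof.
pose s (n m : 'I_(dA * dB) * 'I_(dA * dB)) :=
  2%:R * (K n.1 n.2 * (K n.1 n.2)^* + K m.1 m.2 * (K m.1 m.2)^*).
exists (2%:R^-1 * \sum_n \sum_m s n m); split.
  rewrite mulr_ge0 ?invr_ge0 ?ler0n //; apply: sumr_ge0 => n _; apply: sumr_ge0 => m _.
  by rewrite mulr_ge0 ?ler0n // addr_ge0 // mul_conjC_ge0.
have S := @sepZ _ _ _ _ (2%:R^-1) _ (sep_sum (index_enum _) (fun n =>
   sep_sum (index_enum _) (fun m => pair_sep K n m))).
rewrite invr_ge0 ler0n in S; apply: (sep_ext _ (S isT)) => rho /=.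
under eq_bigr do rewrite !big_split /=.
rewrite !big_split /= [X in _ + X + _]exchange_big /= -psi_expand.
under eq_bigr do rewrite -scaler_suml.
rewrite -scaler_suml /s.
move: (psi K K rho) (Tot rho) => P T.
move: (\sum_n \sum_m _) => S0.
apply/matrixP => x y; rewrite !mxE.
field.
all: by rewrite ?pnatr_eq0.
Qed.

Lemma kraus_sep (R : realType) dA dB (Ks : seq 'M[R[i]]_(dA * dB)) :
  exists t : R[i], 0 <= t /\ separable (fun rho => kraus_map Ks rho + t *: Tot rho).
Proof.
elim: Ks => [|K Ks [t [t0 St]]].
  exists 0; split => //; apply: sep_ext (sep0 _ _ _) => rho.
  by rewrite /kraus_map big_nil scale0r addr0.
have [t1 [t10 S1]] := kraus1 K.
exists (t1 + t); split; first by rewrite addr_ge0.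
apply: sep_ext (sepD S1 St) => rho.
by rewrite /kraus_map big_cons scalerDl addrACA.
Qed.


Lemma dim_neq0 (R : realType) dA dB : (0 < dA)%N -> (0 < dB)%N ->
  ((dA * dB)%:R : R[i]) != 0.
Proof. by move=> hA hB; rewrite pnatr_eq0 muln_eq0 negb_or -!lt0n hA hB. Qed.

Lemma Tot_depol (R : realType) dA dB (hA : (0 < dA)%N) (hB : (0 < dB)%N)
  (rho : 'M[R[i]]_(dA * dB)) : Tot rho = (dA * dB)%:R *: depol rho.
Proof.
by rewrite Tot_eq /depol scalerA mulrC divfK // dim_neq0.
Qed.

Lemma nonneg_real (R : realType) (z : R[i]) : 0 <= z -> exists r : R, 0 <= r /\ z = (r%:C)%C.
Proof.
case: z => a b; rewrite lecE /= => /andP [/eqP b0 a0]; exists a; split => //.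
by rewrite b0.
Qed.

Lemma sep_nonempty (R : realType) dA dB (hA : (0 < dA)%N) (hB : (0 < dB)%N)
  (E : supop R dA dB) : quantum_operation E ->
  exists r : R, 0 <= r /\ separable (fun rho => E rho + (r%:C)%C *: depol rho).
Proof.
move=> [Ks HE]; have [t [t0 St]] := kraus_sep Ks.
have z0 : 0 <= t * (dA * dB)%:R by rewrite mulr_ge0 ?ler0n.
have [r [r0 hr]] := nonneg_real z0.
exists r; split => //; apply: sep_ext St => rho.
by rewrite HE Tot_depol // scalerA hr.
Qed.


Lemma depolD (R : realType) dA dB (A B : 'M[R[i]]_(dA * dB)) :
  depol (A + B) = depol A + depol B.
Proof. by rewrite /depol mxtraceD mulrDl scalerDl. Qed.

Lemma depolZ (R : realType) dA dB (a : R[i]) (A : 'M[R[i]]_(dA * dB)) :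
  depol (a *: A) = a *: depol A.
Proof. by rewrite /depol mxtraceZ scalerA mulrA. Qed.

Lemma depol_idem (R : realType) dA dB (hA : (0 < dA)%N) (hB : (0 < dB)%N)
  (rho : 'M[R[i]]_(dA * dB)) : depol (depol rho) = depol rho.
Proof.
by rewrite /depol mxtraceZ mxtrace1 divfK ?dim_neq0.
Qed.

Lemma kraus_mapD (R : realType) dA dB (Ks : seq 'M[R[i]]_(dA * dB)) A B :
  kraus_map Ks (A + B) = kraus_map Ks A + kraus_map Ks B.
Proof.
by rewrite /kraus_map -big_split; apply: eq_bigr => K _; rewrite mulmxDr mulmxDl.
Qed.

Lemma kraus_mapZ (R : realType) dA dB (Ks : seq 'M[R[i]]_(dA * dB)) (a : R[i]) A :
  kraus_map Ks (a *: A) = a *: kraus_map Ks A.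
Proof.
by rewrite /kraus_map scaler_sumr; apply: eq_bigr => K _; rewrite scalemxAl scalemxAr.
Qed.

Lemma comp_eq (R : realType) dA dB (hA : (0 < dA)%N) (hB : (0 < dB)%N)
  (E1 E2 : supop R dA dB) (s t : R) :
  doubly_stochastic E1 -> trace_preserving_qo E2 -> forall rho,
  ((fun rho => E1 rho + (s%:C)%C *: depol rho) \o (fun rho => E2 rho + (t%:C)%C *: depol rho)) rho
  = (E1 \o E2) rho + ((s + t + s * t)%:C)%C *: depol rho.
Proof.
move=> [[[Ks HE1] _] U1] [_ T2] rho /=.
have E1D : E1 (depol rho) = depol rho.
  by rewrite !HE1 /depol kraus_mapZ -HE1 U1.
have DE2 : depol (E2 rho) = depol rho by rewrite /depol T2.
rewrite HE1 kraus_mapD kraus_mapZ -!HE1 E1D depolD depolZ DE2 depol_idem //.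
rewrite !rmorphD rmorphM /=.
move: (E1 (E2 rho)) (depol rho) => P Q.
apply/matrixP => x y; rewrite !mxE.
ring.
Qed.

Definition Sset (R : realType) dA dB (E : supop R dA dB) :=
  [set t : R | 0 <= t /\ separable (fun rho => E rho + (t%:C)%C *: depol rho)]%classic.

Lemma Sset_lb (R : realType) dA dB (E : supop R dA dB) : lbound (Sset E) 0.
Proof. by move=> x [].
Qed.

Unset Implicit Arguments.

Theorem proposition5 (R : realType) (dA dB : nat) (hA : (0 < dA)%N) (hB : (0 < dB)%N)
  (E1 E2 : supop R dA dB) :
  doubly_stochastic E1 -> trace_preserving_qo E2 ->
  random_robustness (E1 \o E2) <=
    random_robustness E1 + random_robustness E2
    + random_robustness E1 * random_robustness E2.
Proof.
move=> D1 T2.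
have ne1 : (Sset E1 !=set0)%classic.
  by have [r [r0 Sr]] := sep_nonempty hA hB D1.1.1; exists r.
have ne2 : (Sset E2 !=set0)%classic.
  by have [r [r0 Sr]] := sep_nonempty hA hB T2.1; exists r.
have key s t : Sset E1 s -> Sset E2 t -> Sset (E1 \o E2) (s + t + s * t).
  move=> [s0 Ss] [t0 St]; split; first by rewrite !addr_ge0 // mulr_ge0.
  exact: sep_ext (comp_eq hA hB s t D1 T2) (sep_comp Ss St).
rewrite /random_robustness /rel_robustness -/(Sset E1) -/(Sset E2) -/(Sset (E1 \o E2)).
set r1 := inf (Sset E1); set r2 := inf (Sset E2); set r12 := inf (Sset (E1 \o E2)).
have lb12 : has_lbound (Sset (E1 \o E2)) by exists 0; apply: Sset_lb.
have r12le s t : Sset E1 s -> Sset E2 t -> r12 <= s + t + s * t.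
  by move=> Hs Ht; apply: ge_inf lb12 _ (key s t Hs Ht).
have r10 : 0 <= r1 by apply: lb_le_inf ne1 (@Sset_lb _ _ _ E1).
have stepA t : Sset E2 t -> r12 <= r1 + t * (1 + r1).
  move=> Ht; have t0 : 0 <= t by case: Ht.
  have : (r12 - t) / (1 + t) <= r1.
    have lbA : lbound (Sset E1) ((r12 - t) / (1 + t)).
      move=> s Hs; rewrite ler_pdivrMr; last by lra.
      have := r12le s t Hs Ht; have : 0 <= s by case: Hs.
      nra.
    exact: lb_le_inf ne1 lbA.
  rewrite ler_pdivrMr; last by lra.
  nra.
have : (r12 - r1) / (1 + r1) <= r2.
  have lbB : lbound (Sset E2) ((r12 - r1) / (1 + r1)).
    move=> t Ht; rewrite ler_pdivrMr; last by lra.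
    have := stepA t Ht; nra.
  exact: lb_le_inf ne2 lbB.
rewrite ler_pdivrMr; last by lra.
nra.
Qed.
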